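(* If \(A\) is a finite geometrically proper set of positive bump functions in \(\operatorname{Homeo}_+(I)\), then the maximal stretched transition chains of \(A\) (regarded as subsets of \(A\)) partition the set of nonisolated elements of \(A\).
   Context: \(I=[0,1]\). A positive bump is an element of \(\operatorname{Homeo}_+(I)\) whose support \(\{t: ta\neq t\}\) is a single open interval \((x,y)\) on which \(ta>t\); its transition points are \(x\) (left) and \(y\) (right). A transition point of \(A\) is a transition point of some element of \(A\). \(A\) is geometrically proper if no point is a left transition point of two distinct elements of \(A\), nor a right transition point of two distinct elements. An element of \(A\) is isolated if its support contains no transition point of \(A\). A sequence \((a_i\mid i\le k)\) of nonisolated elements of \(A\), with \(\operatorname{supt}(a_i)=(x_i,y_i)\), is a stretched transition chain of \(A\) if (1) for all \(i<k\), \(x_i<x_{i+1}<y_i<y_{i+1}\), and (2) no transition point of \(A\) lies in any interval \((x_{i+1},y_i)\). It is maximal if it is maximal under containment when regarded as a subset of \(A\). *)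

(* Defs.v *)
From Stdlib Require Import Reals List.
Open Scope R_scope.

(* Convention: an element of Homeo_+(I), I = [0,1], is represented by a
   function f : R -> R that is the identity outside I.  This makes the
   representation injective (two such functions are equal iff they agree
   on I). *)

Definition inI (t : R) : Prop := 0 <= t <= 1.

Definition continuous_on_I (f : R -> R) : Prop :=
  forall t, inI t -> forall eps, 0 < eps ->
    exists delta, 0 < delta /\
      forall s, inI s -> Rabs (s - t) < delta -> Rabs (f s - f t) < eps.

Definition homeo_plus (f : R -> R) : Prop :=
  (forall t, ~ inI t -> f t = t) /\
  (forall t, inI t -> inI (f t)) /\
  continuous_on_I f /\
  (exists g : R -> R,
      (forall t, inI t -> inI (g t)) /\
      (forall t, inI t -> g (f t) = t) /\
      (forall t, inI t -> f (g t) = t) /\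
      continuous_on_I g) /\
  (forall s t, inI s -> inI t -> s < t -> f s < f t).

Definition supt (f : R -> R) (t : R) : Prop := f t <> t.

Definition bump_on (f : R -> R) (x y : R) : Prop :=
  x < y /\
  (forall t, supt f t <-> x < t < y) /\
  (forall t, x < t < y -> f t > t).

Definition positive_bump (f : R -> R) : Prop :=
  homeo_plus f /\ exists x y, bump_on f x y.

Definition left_tp (f : R -> R) (p : R) : Prop := exists y, bump_on f p y.
Definition right_tp (f : R -> R) (p : R) : Prop := exists x, bump_on f x p.

Definition fin_set (A : (R -> R) -> Prop) : Prop :=
  exists l : list (R -> R), forall f, A f <-> In f l.

Definition tp_of (A : (R -> R) -> Prop) (p : R) : Prop :=
  exists a, A a /\ (left_tp a p \/ right_tp a p).

Definition geometrically_proper (A : (R -> R) -> Prop) : Prop :=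
  (forall a b p, A a -> A b -> left_tp a p -> left_tp b p -> a = b) /\
  (forall a b p, A a -> A b -> right_tp a p -> right_tp b p -> a = b).

Definition isolated (A : (R -> R) -> Prop) (a : R -> R) : Prop :=
  A a /\ forall t, supt a t -> ~ tp_of A t.

Definition nonisolated (A : (R -> R) -> Prop) (a : R -> R) : Prop :=
  A a /\ ~ isolated A a.

Definition chain_step (A : (R -> R) -> Prop) (a b : R -> R) : Prop :=
  exists xa ya xb yb,
    bump_on a xa ya /\ bump_on b xb yb /\
    xa < xb /\ xb < ya /\ ya < yb /\
    (forall t, xb < t < ya -> ~ tp_of A t).

Fixpoint chain_from (A : (R -> R) -> Prop) (a : R -> R) (l : list (R -> R))
  : Prop :=
  match l with
  | nil => True
  | b :: l' => chain_step A a b /\ chain_from A b l'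
  end.

Definition stretched_chain (A : (R -> R) -> Prop) (c : list (R -> R)) : Prop :=
  match c with
  | nil => False
  | a :: l => (forall f, In f c -> nonisolated A f) /\ chain_from A a l
  end.

Definition maximal_stretched_chain (A : (R -> R) -> Prop) (c : list (R -> R))
  : Prop :=
  stretched_chain A c /\
  ~ (exists c', stretched_chain A c' /\
                (forall f, In f c -> In f c') /\
                (exists f, In f c' /\ ~ In f c)).

(* Main.v *)
Require Import Defs.
From Stdlib Require Import Reals List Lra Lia Relations Classical.
Open Scope R_scope.

Lemma bump_unique f x y x' y' : bump_on f x y -> bump_on f x' y' -> x = x' /\ y = y'.
Proof.
  intros [Hxy [Hs _]] [Hxy' [Hs' _]].
  assert (E : forall t, x < t < y <-> x' < t < y').
  { intro t. rewrite <- Hs, <- Hs'. tauto. }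
  assert (x = x').
  { destruct (Rtotal_order x x') as [h|[h|h]]; auto; exfalso.
    - destruct (Rle_dec x' y).
      + destruct (E ((x+x')/2)) as [E1 _]. specialize (E1 ltac:(lra)). lra.
      + destruct (E ((x+y)/2)) as [E1 _]. specialize (E1 ltac:(lra)). lra.
    - destruct (Rle_dec x y').
      + destruct (E ((x+x')/2)) as [_ E1]. specialize (E1 ltac:(lra)). lra.
      + destruct (E ((x'+y')/2)) as [_ E1]. specialize (E1 ltac:(lra)). lra. }
  subst x'. split; auto.
  destruct (Rtotal_order y y') as [h|[h|h]]; auto; exfalso.
  - destruct (E ((Rmax x y+y')/2)) as [_ E1]. unfold Rmax in E1.
    destruct (Rle_dec x y); [specialize (E1 ltac:(lra))|]; lra.
  - destruct (E ((Rmax x y'+y)/2)) as [E1 _]. unfold Rmax in E1.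
    destruct (Rle_dec x y'); [specialize (E1 ltac:(lra))|]; lra.
Qed.

Section S.
Variable A : (R -> R) -> Prop.
Hypothesis GP : geometrically_proper A.

Lemma succ_unique f h g : A h -> A g -> chain_step A f h -> chain_step A f g -> h = g.
Proof.
  intros Ah Ag (xa&ya&xb&yb&Ba&Bb&h1&h2&h3&Hn) (xa'&ya'&xc&yc&Ba'&Bc&h1'&h2'&h3'&Hn').
  destruct (bump_unique _ _ _ _ _ Ba Ba'); subst xa' ya'.
  assert (Tb : tp_of A xb) by (exists h; split; auto; left; exists yb; auto).
  assert (Tc : tp_of A xc) by (exists g; split; auto; left; exists yc; auto).
  destruct (Rtotal_order xb xc) as [q|[q|q]].
  - exfalso; apply (Hn xc); auto; lra.
  - subst xc. destruct GP as [G _]. apply (G h g xb); auto.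
    exists yb; auto. exists yc; auto.
  - exfalso; apply (Hn' xb); auto; lra.
Qed.

Lemma pred_unique f h g : A h -> A g -> chain_step A h f -> chain_step A g f -> h = g.
Proof.
  intros Ah Ag (xa&ya&xb&yb&Ba&Bb&h1&h2&h3&Hn) (xa'&ya'&xc&yc&Ba'&Bc&h1'&h2'&h3'&Hn').
  destruct (bump_unique _ _ _ _ _ Bb Bc); subst xc yc.
  assert (Tb : tp_of A ya) by (exists h; split; auto; right; exists xa; auto).
  assert (Tc : tp_of A ya') by (exists g; split; auto; right; exists xa'; auto).
  destruct (Rtotal_order ya ya') as [q|[q|q]].
  - exfalso; apply (Hn' ya); auto; lra.
  - subst ya'. destruct GP as [_ G]. apply (G h g ya); auto.
    exists xa; auto. exists xa'; auto.
  - exfalso; apply (Hn ya'); auto; lra.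
Qed.

Lemma order_lemma : forall l a, chain_from A a l -> forall xa, (exists y, bump_on a xa y) ->
  forall f, In f l -> forall xf, (exists y, bump_on f xf y) -> xa < xf.
Proof.
  induction l as [|b l IH]; simpl; intros a Hc xa [ya Ba] f Hf xf [yf Bf]; [contradiction|].
  destruct Hc as [(xa0&ya0&xb&yb&Ba0&Bb&h1&_) Hc].
  destruct (bump_unique _ _ _ _ _ Ba Ba0); subst.
  destruct Hf as [<-|Hf].
  - destruct (bump_unique _ _ _ _ _ Bb Bf); subst; lra.
  - assert (xb < xf) by (eapply IH; eauto). lra.
Qed.

Lemma chain_nodup : forall l a, chain_from A a l -> NoDup (a :: l).
Proof.
  induction l as [|b l IH]; simpl; intros a Hc.
  - constructor; [simpl; tauto| constructor].
  - constructor.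
    + intro Hin. pose proof Hc as Hc0. destruct Hc as [Hs Hc].
      destruct Hs as (xa&ya&xb&yb&Ba&_).
      assert (xa < xa).
      { apply (order_lemma (b::l) a Hc0 xa (ex_intro _ ya Ba) a Hin xa (ex_intro _ ya Ba)). }
      lra.
    + apply IH; tauto.
Qed.

Definition R' f g := chain_step A f g /\ nonisolated A f /\ nonisolated A g.

Lemma chain_conn : forall l a, chain_from A a l -> (forall f, In f (a::l) -> nonisolated A f) ->
  forall f, In f (a::l) -> clos_refl_sym_trans _ R' a f.
Proof.
  induction l as [|b l IH]; simpl; intros a Hc Hn f Hf.
  - destruct Hf as [<-|[]]. apply rst_refl.
  - destruct Hf as [<-|Hf]. apply rst_refl.
    apply rst_trans with b.
    + apply rst_step. split; [tauto|split; apply Hn; simpl; tauto].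
    + apply IH; [tauto| |exact Hf]. intros; apply Hn; simpl in *; tauto.
Qed.

Lemma succ_lemma : forall l a f, chain_from A a l -> In f (a::l) ->
  (exists h, In h (a::l) /\ chain_step A f h) \/
  (forall g, chain_step A f g -> chain_from A a (l ++ g :: nil)).
Proof.
  induction l as [|b l IH]; simpl; intros a f Hc Hf.
  - right. destruct Hf as [<-|[]]. intros; simpl; tauto.
  - destruct Hf as [<-|Hf].
    + left. exists b. tauto.
    + destruct (IH b f ltac:(tauto) Hf) as [[h [H1 H2]]|H].
      * left. exists h. simpl in H1; tauto.
      * right. intros g Hg. simpl. split; [tauto|]. apply H; auto.
Qed.

Lemma pred_lemma : forall l a f, chain_from A a l -> In f (a::l) ->
  (exists h, In h (a::l) /\ chain_step A h f) \/ f = a.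
Proof.
  induction l as [|b l IH]; simpl; intros a f Hc Hf.
  - right. destruct Hf as [<-|[]]; auto.
  - destruct Hf as [<-|Hf]; [right; auto|].
    destruct (IH b f ltac:(tauto) Hf) as [[h [H1 H2]]|H].
    + left. exists h. simpl in H1; tauto.
    + left. subst. exists a. tauto.
Qed.

Lemma sc_in c f : stretched_chain A c -> In f c -> nonisolated A f.
Proof. destruct c; simpl; [tauto|]. intros [H _]. apply H. Qed.

Lemma closed_step c : maximal_stretched_chain A c -> forall x y, R' x y -> (In x c <-> In y c).
Proof.
  intros [Hc Hm] x y [Hs [Nx Ny]].
  destruct c as [|a l]; [destruct Hc|]. destruct Hc as [Hn Hch].
  split; intro Hin.
  - destruct (classic (In y (a::l))) as [|Hy]; auto. exfalso.
    destruct (succ_lemma l a x Hch Hin) as [[h [H1 H2]]|H].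
    + apply Hy. replace y with h; auto.
      apply (succ_unique x); auto. apply (sc_in (a::l)); auto. split; auto. apply Ny.
    + apply Hm. exists (a :: l ++ y :: nil). split; [|split].
      * simpl. split; [|apply H; auto].
        intros f [<-|Hf]; [apply Hn; simpl; auto|].
        apply in_app_or in Hf. destruct Hf as [Hf|[<-|[]]]; auto. apply Hn; simpl; auto.
      * intros f [<-|Hf]; simpl; auto. right; apply in_or_app; auto.
      * exists y. split; auto. simpl; right; apply in_or_app; simpl; auto.
  - destruct (classic (In x (a::l))) as [|Hx]; auto. exfalso.
    destruct (pred_lemma l a y Hch Hin) as [[h [H1 H2]]|H].
    + apply Hx. replace x with h; auto.
      apply (pred_unique y); auto. apply (sc_in (a::l)); auto. split; auto. apply Nx.
    + subst y. apply Hm. exists (x :: a :: l). split; [|split].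
      * simpl. split; [|split; auto].
        intros f [<-|Hf]; auto.
      * intros f Hf; simpl; auto.
      * exists x. split; simpl; auto.
Qed.

Lemma closed_conn c : maximal_stretched_chain A c -> forall x y,
  clos_refl_sym_trans _ R' x y -> (In x c <-> In y c).
Proof.
  intros Hc x y H. induction H; try tauto. apply closed_step; auto.
Qed.

Lemma max_nat (P : nat -> Prop) N n0 : P n0 -> (forall n, P n -> (n <= N)%nat) ->
  exists n, P n /\ forall m, P m -> (m <= n)%nat.
Proof.
  intros H0 HB.
  assert (forall d n, P n -> (N - n = d)%nat -> exists n, P n /\ forall m, P m -> (m <= n)%nat).
  { induction d as [d IH] using (well_founded_induction Wf_nat.lt_wf).
    intros n Pn Hd.
    destruct (classic (exists m, P m /\ (n < m)%nat)) as [[m [Pm Hm]]|Hno].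
    - apply (IH (N - m)%nat) with m; auto. specialize (HB m Pm). lia.
    - exists n. split; auto. intros m Pm. destruct (Nat.le_gt_cases m n); auto.
      exfalso; apply Hno; eauto. }
  eauto.
Qed.

End S.

Theorem proposition4p1 (A : (R -> R) -> Prop) :
  fin_set A ->
  (forall a, A a -> positive_bump a) ->
  geometrically_proper A ->
  (* the blocks (underlying sets of maximal chains) cover exactly the
     nonisolated elements ... *)
  (forall a, nonisolated A a <->
     exists c, maximal_stretched_chain A c /\ In a c) /\
  (* ... and two blocks that meet coincide *)
  (forall c1 c2, maximal_stretched_chain A c1 -> maximal_stretched_chain A c2 ->
     (exists a, In a c1 /\ In a c2) ->
     forall f, In f c1 <-> In f c2).
Proof.
  intros [L HL] _ GP. split.
  - intro a. split.
    + intro Na.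
      set (P := fun n => exists c, stretched_chain A c /\ In a c /\ length c = n).
      assert (ND : forall c, stretched_chain A c -> NoDup c).
      { intros [|b l] Hc; [destruct Hc|]. apply (chain_nodup A); apply Hc. }
      destruct (max_nat P (length L) 1) as [n [[c [Hc [Ha Hl]]] Hmax]].
      * exists (a :: nil). split; [|simpl; auto]. simpl. split; auto.
        intros f [<-|[]]; auto.
      * intros n [c [Hc [_ <-]]]. apply NoDup_incl_length; auto.
        intros f Hf. apply HL. apply (sc_in A c f Hc Hf).
      * exists c. split; auto. split; auto.
        intros (c' & Hc' & Hinc & f & Hf1 & Hf2).
        assert (length c' <= n)%nat by (apply Hmax; exists c'; auto).
        apply Hf2. apply (NoDup_length_incl (l:=c) (l':=c')); auto. lia.
    + intros [c [[Hc _] Hin]]. apply (sc_in A c); auto.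
  - intros c1 c2 M1 M2 [a [Ha1 Ha2]] f.
    assert (forall d1 d2, maximal_stretched_chain A d1 -> maximal_stretched_chain A d2 ->
              In a d1 -> In a d2 -> In f d1 -> In f d2).
    { intros d1 d2 N1 N2 H1 H2 Hf.
      destruct N1 as [S1 _]. destruct d1 as [|b l]; [destruct S1|].
      destruct S1 as [Hn Hch].
      assert (Cf := chain_conn A l b Hch Hn f Hf).
      assert (Ca := chain_conn A l b Hch Hn a H1).
      apply (closed_conn A GP d2 N2 a f); auto.
      apply rst_trans with b; auto. apply rst_sym; auto. }
    split; eauto.
Qed.
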